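(* Let $\mathbf{w}$ be a Sturmian word over $\{0,1\}$ and $k \in \mathbb{N}$. (1) Let $\mathbf{u} = \varphi_b^k(\mathbf{w})$. Then $0^k$ is a bispecial prefix of $\mathbf{u}$ and $\mathbf{d}_{\mathbf{u}}(0^k) = \mathbf{w}$ (up to a permutation of letters). (2) If $1\mathbf{w}$ is a Sturmian word, then $\varphi_a^k(1\mathbf{w}) = 1\varphi_b^k(\mathbf{w})$.
   Context: The morphisms on $\{0,1\}^*$ are $\varphi_a: 0 \mapsto 0, 1 \mapsto 10$ and $\varphi_b: 0 \mapsto 0, 1 \mapsto 01$, extended to infinite words letterwise. A Sturmian word is an infinite binary word having exactly $n+1$ factors of length $n$ for every $n$. A factor $v$ of $\mathbf{u}$ is right (left) special if $va, vb$ (resp. $av, bv$) are factors for two distinct letters $a \ne b$; bispecial if both. Derived word: for a uniformly recurrent word $\mathbf{u}$ and a factor $v$, a return word of $v$ is a factor $r$ such that $rv$ is a factor of $\mathbf{u}$ in which $v$ occurs exactly twice, as a prefix and as a suffix. If $r_0, \dots, r_k$ are all the return words of $v$, write $\mathbf{u} = p\, r_{s_0} r_{s_1} r_{s_2}\cdots$ where $|p|$ is the first occurrence of $v$ in $\mathbf{u}$; then $\mathbf{d}_{\mathbf{u}}(v) = s_0 s_1 s_2 \cdots$. Derived words are considered up to a permutation of letters; the derived word to the empty word is $\mathbf{u}$ itself. *)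

(* Defs.v *)
(* Letters: false = 0, true = 1. *)
From mathcomp Require Import all_boot.
Set Implicit Arguments. Unset Strict Implicit. Unset Printing Implicit Defensive.

Definition iword := nat -> bool.

Definition window (u : iword) (i n : nat) : seq bool := mkseq (fun j => u (i + j)) n.

Definition occursAt (u : iword) (v : seq bool) (i : nat) : bool := window u i (size v) == v.

Definition factor (u : iword) (v : seq bool) : Prop := exists i, occursAt u v i.
Definition is_prefix (u : iword) (v : seq bool) : Prop := occursAt u v 0.

Definition sturmian (u : iword) : Prop :=
  forall n, exists s : seq (seq bool),
    uniq s /\ size s = n.+1 /\ (forall v, (size v = n /\ factor u v) <-> v \in s).

Definition right_special (u : iword) (v : seq bool) : Prop :=
  exists a b : bool, a != b /\ factor u (rcons v a) /\ factor u (rcons v b).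
Definition left_special (u : iword) (v : seq bool) : Prop :=
  exists a b : bool, a != b /\ factor u (a :: v) /\ factor u (b :: v).
Definition bispecial (u : iword) (v : seq bool) : Prop :=
  right_special u v /\ left_special u v.

(* Image of an infinite word under a non-erasing morphism f (letterwise
   extension): position n of f(u) lies within f(u 0) ... f(u n). *)
Definition morph_iword (f : bool -> seq bool) (u : iword) : iword :=
  fun n => nth false (flatten [seq f (u j) | j <- iota 0 n.+1]) n.

Definition phi_a (x : bool) : seq bool := if x then [:: true; false] else [:: false].
Definition phi_b (x : bool) : seq bool := if x then [:: false; true] else [:: false].

Definition icons (a : bool) (u : iword) : iword := fun n => if n is m.+1 then u m else a.

Definition occs_fin (v x : seq bool) : seq nat :=
  [seq i <- iota 0 (size x).+1 | take (size v) (drop i x) == v & size v + i <= size x].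

Definition return_word (u : iword) (v r : seq bool) : Prop :=
  factor u (r ++ v) /\ occs_fin v (r ++ v) = [:: 0; size r].

Definition first_occ (u : iword) (v : seq bool) (p0 : nat) : Prop :=
  occursAt u v p0 /\ forall i, i < p0 -> ~~ occursAt u v i.

(* d is the derived word of u w.r.t. v, for the enumeration rs = r_0,...,r_K
   of all return words of v:  u = p r_{d 0} r_{d 1} ... with |p| the first
   occurrence of v. *)
Definition derived_word_wrt (u : iword) (v : seq bool) (rs : seq (seq bool))
    (d : nat -> nat) : Prop :=
  uniq rs /\ (forall r, return_word u v r <-> r \in rs) /\
  exists p0, first_occ u v p0 /\
    forall m, d m < size rs /\
      occursAt u (nth [::] rs (d m)) (p0 + \sum_(j < m) size (nth [::] rs (d j))).

Definition derived_word_is_up_to_perm (u : iword) (v : seq bool) (w : iword) : Prop :=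
  exists (rs : seq (seq bool)) (d : nat -> nat), derived_word_wrt u v rs d /\
    exists sigma : bool -> nat, injective sigma /\
      (forall i, i < size rs -> exists b, sigma b = i) /\
      (forall m, d m = sigma (w m)).

(* Main.v *)
From Stdlib Require Import FunctionalExtensionality Classical.
Require Import Defs.
From mathcomp Require Import all_boot zify.
Set Implicit Arguments. Unset Strict Implicit. Unset Printing Implicit Defensive.

Definition Fm (f : bool -> seq bool) (u : iword) N := flatten [seq f (u j) | j <- iota 0 N].
Definition nonerasing (f : bool -> seq bool) := forall b, 0 < size (f b).

Lemma Fm_add f u a b : Fm f u (a + b) = Fm f u a ++ flatten [seq f (u j) | j <- iota a b].
Proof. by rewrite /Fm iotaD map_cat flatten_cat add0n. Qed.

Lemma size_flat g (s : seq bool) : nonerasing g -> size s <= size (flatten (map g s)).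
Proof.
move=> hg; elim: s => //= a s IH; rewrite size_cat.
have := hg a; lia.
Qed.

Lemma size_Fm f u N : nonerasing f -> N <= size (Fm f u N).
Proof.
move=> hf; rewrite /Fm.
have -> : [seq f (u j) | j <- iota 0 N] = map f (map u (iota 0 N)) by rewrite -map_comp.
have := size_flat (map u (iota 0 N)) hf; rewrite size_map size_iota; lia.
Qed.

Lemma nth_Fm_le f u N M n : N <= M -> n < size (Fm f u N) ->
  nth false (Fm f u M) n = nth false (Fm f u N) n.
Proof. by move=> NM hn; rewrite -(subnKC NM) Fm_add nth_cat hn. Qed.

Lemma morphE f u n M : nonerasing f -> n < size (Fm f u M) ->
  morph_iword f u n = nth false (Fm f u M) n.
Proof.
move=> hf hn; rewrite /morph_iword -/(Fm f u n.+1).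
case: (leqP M n.+1) => h.
  by rewrite (nth_Fm_le h hn).
rewrite (nth_Fm_le (ltnW h)) //; have := @size_Fm f u n.+1 hf; lia.
Qed.

Lemma flatten_map_comp (g f : bool -> seq bool) (s : seq bool) :
  flatten (map g (flatten (map f s))) = flatten (map (fun b => flatten (map g (f b))) s).
Proof. by elim: s => //= a s IH; rewrite map_cat flatten_cat IH. Qed.

Lemma ne_comp f g : nonerasing f -> nonerasing g -> nonerasing (fun b => flatten (map g (f b))).
Proof.
move=> hf hg b; have := hf b; case: (f b) => //= x s _; rewrite size_cat; have := hg x; lia.
Qed.

Lemma morph_comp f g u : nonerasing f -> nonerasing g ->
  morph_iword g (morph_iword f u) = morph_iword (fun b => flatten (map g (f b))) u.
Proof.
move=> hf hg; apply: functional_extensionality => n.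
set X := Fm f u n.+1.
have sX : n < size X by have := @size_Fm f u n.+1 hf; rewrite -/X; lia.
have hv : forall i, i < size X -> morph_iword f u i = nth false X i.
  by move=> i hi; apply: morphE.
have hX : [seq morph_iword f u j | j <- iota 0 (size X)] = X.
  apply: (@eq_from_nth _ false); first by rewrite size_map size_iota.
  move=> i; rewrite size_map size_iota => hi.
  by rewrite (nth_map 0) ?size_iota // nth_iota // add0n hv.
have eF : Fm g (morph_iword f u) (size X) = flatten (map g X).
  rewrite /Fm.
  have -> : [seq g (morph_iword f u j) | j <- iota 0 (size X)] =
    map g (map (morph_iword f u) (iota 0 (size X))) by rewrite -map_comp.
  by rewrite hX.
have eX : X = flatten (map f (map u (iota 0 n.+1))) by rewrite /X /Fm -map_comp.
rewrite (morphE (M := size X)) //; last first.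
  rewrite eF; have := size_flat X hg; lia.
rewrite (@morphE _ u n n.+1 (ne_comp hf hg)); last first.
  have := @size_Fm (fun b => flatten (map g (f b))) u n.+1 (ne_comp hf hg); lia.
by rewrite eF eX flatten_map_comp /Fm -map_comp.
Qed.

Lemma fin_ab (s : seq bool) :
  false :: flatten (map phi_a s) = rcons (flatten (map phi_b s)) false.
Proof. by elim: s => //= [[]] s IH /=; rewrite IH. Qed.

Lemma ne_a : nonerasing phi_a. Proof. by case. Qed.
Lemma ne_b : nonerasing phi_b. Proof. by case. Qed.

Lemma morph_ab v : morph_iword phi_a (icons true v) = icons true (morph_iword phi_b v).
Proof.
apply: functional_extensionality => -[|m] //.
change (icons true (morph_iword phi_b v) m.+1) with (morph_iword phi_b v m).
rewrite /morph_iword.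
have -> : [seq phi_a (icons true v j) | j <- iota 0 m.+2] =
   [:: true; false] :: map phi_a (map v (iota 0 m.+1)).
  have -> : iota 0 m.+2 = 0 :: iota (1 + 0) m.+1 by [].
  rewrite (iotaDl 1 0) /=; congr cons.
  by rewrite -!map_comp.
have -> : [seq phi_b (v j) | j <- iota 0 m.+1] = map phi_b (map v (iota 0 m.+1)).
  by rewrite -map_comp.
have := size_flat (map v (iota 0 m.+1)) ne_b; rewrite size_map size_iota.
move: (map v (iota 0 m.+1)) => s h.
rewrite /= fin_ab nth_rcons ifT //; lia.
Qed.

Lemma part2 (w : iword) k :
  iter k (morph_iword phi_a) (icons true w) = icons true (iter k (morph_iword phi_b) w).
Proof. by elim: k => //= k ->; rewrite morph_ab. Qed.

Definition blk k (b : bool) : seq bool := if b then nseq k false ++ [:: true] else [:: false].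

Lemma ne_blk k : nonerasing (blk k).
Proof. by case => //=; rewrite size_cat /=; lia. Qed.

Lemma blk0 w : morph_iword (blk 0) w = w.
Proof.
apply: functional_extensionality => n; rewrite /morph_iword.
have -> : [seq blk 0 (w j) | j <- iota 0 n.+1] = [seq [:: w j] | j <- iota 0 n.+1].
  by apply: eq_map => j; case: (w j).
have -> : forall s : seq nat, flatten [seq [:: w j] | j <- s] = map w s.
  by elim => //= a s ->.
by rewrite (nth_map 0) ?size_iota // nth_iota.
Qed.

Lemma blk_succ k : (fun b => flatten (map phi_b (blk k b))) = blk k.+1.
Proof.
apply: functional_extensionality => -[] //=.
by elim: k => //= k ->.
Qed.

Lemma iter_blk k w : iter k (morph_iword phi_b) w = morph_iword (blk k) w.
Proof.
elim: k => [|k IH]; first by rewrite blk0.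
by rewrite iterS IH morph_comp ?blk_succ //; [apply: ne_blk | apply: ne_b].
Qed.

Definition S k w m := size (Fm (blk k) w m).

Lemma S0 k w : S k w 0 = 0. Proof. by []. Qed.

Lemma S_succ k w m : S k w m.+1 = S k w m + size (blk k (w m)).
Proof. by rewrite /S -addn1 Fm_add size_cat /= cats0. Qed.

Lemma S_lt k w m d : S k w m < S k w (m + d.+1).
Proof.
elim: d => [|d IH].
  by rewrite addn1 S_succ; have := ne_blk k (w m); lia.
rewrite addnS S_succ; have := ne_blk k (w (m + d.+1)); lia.
Qed.

Lemma S_ltE k w m m' : (S k w m < S k w m') = (m < m').
Proof.
case: (ltnP m m') => h.
  have [d ->] : exists d, m' = m + d.+1 by exists (m' - m).-1; lia.
  by rewrite S_lt.
apply/negbTE; rewrite -leqNgt.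
move: h; rewrite leq_eqVlt => /orP [/eqP ->|h']; first exact: leqnn.
have [d ->] : exists d, m = m' + d.+1 by exists (m - m').-1; lia.
by apply: ltnW; rewrite S_lt.
Qed.

Lemma S_leE k w m m' : (S k w m <= S k w m') = (m <= m').
Proof. by rewrite leqNgt S_ltE -leqNgt. Qed.

Lemma S_inj k w m m' : S k w m = S k w m' -> m = m'.
Proof. by move=> e; apply/eqP; rewrite eqn_leq -(S_leE k w m) -(S_leE k w m') e leqnn. Qed.

Lemma S_cover k w n : exists m, S k w m <= n < S k w m.+1.
Proof.
elim: n => [|n [m /andP [h1 h2]]].
  exists 0; rewrite S0; have := S_lt k w 0 0; rewrite add0n; lia.
case: (ltnP n.+1 (S k w m.+1)) => h.
  by exists m; rewrite h andbT; lia.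
exists m.+1; have := S_lt k w m.+1 0; rewrite addn1; lia.
Qed.

Lemma blockval k w m j : j < size (blk k (w m)) ->
  morph_iword (blk k) w (S k w m + j) = nth false (blk k (w m)) j.
Proof.
move=> hj; rewrite (@morphE _ _ _ m.+1 (ne_blk k)); last by rewrite -/(S k w m.+1) S_succ; lia.
by rewrite -addn1 Fm_add /= cats0 nth_cat -/(S k w m) ltnNge leq_addr /= addKn.
Qed.

Lemma Zblk k (T : Type) (g : T -> bool) (s : seq T) j : j < k ->
  nth false (flatten [seq blk k (g i) | i <- s]) j = false.
Proof.
elim: s j => [|a s IH] j hj /=; first by rewrite nth_nil.
case: (g a) => /=.
  by rewrite -catA nth_cat size_nseq hj nth_nseq hj.
by case: j hj => //= j hj; apply: IH; lia.
Qed.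

Lemma zeros k w m j : j < k -> morph_iword (blk k) w (S k w m + j) = false.
Proof.
move=> hj; rewrite (@morphE _ _ _ (m + (S k w m + j).+1) (ne_blk k)); last first.
  have := @size_Fm (blk k) w (m + (S k w m + j).+1) (ne_blk k); lia.
by rewrite Fm_add nth_cat -/(S k w m) (_ : S k w m + j < S k w m = false) ?addKn ?Zblk //; lia.
Qed.

Lemma nth_window u i n j : j < n -> nth false (window u i n) j = u (i + j).
Proof. by move=> h; rewrite /window nth_mkseq. Qed.

Lemma window_eq u i n x : size x = n -> (forall j, j < n -> u (i + j) = nth false x j) ->
  window u i n = x.
Proof.
move=> hs h; apply: (@eq_from_nth _ false); first by rewrite size_mkseq.
by move=> j; rewrite size_mkseq => hj; rewrite nth_window // h.
Qed.

Lemma occ_nth u v i : occursAt u v i -> forall j, j < size v -> u (i + j) = nth false v j.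
Proof. by move=> h j hj; rewrite -(eqP h) nth_window. Qed.

Lemma window_sub u i n j L : j + L <= n -> take L (drop j (window u i n)) = window u (i + j) L.
Proof.
move=> h.
have sz : size (take L (drop j (window u i n))) = L.
  by rewrite size_take size_drop size_mkseq; case: ifP => //; lia.
apply: (@eq_from_nth _ false); first by rewrite sz size_mkseq.
move=> t; rewrite sz => htL.
by rewrite nth_take // nth_drop !nth_window // ?addnA //; lia.
Qed.

Lemma mem_occs v x j : (j \in occs_fin v x) = (take (size v) (drop j x) == v) && (size v + j <= size x).
Proof.
rewrite mem_filter mem_iota add0n /=.
case: (take (size v) (drop j x) == v) => //=.
case h: (size v + j <= size x) => //=; lia.
Qed.

Lemma mem_occs_win u v i n j :
  (j \in occs_fin v (window u i n)) = (size v + j <= n) && occursAt u v (i + j).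
Proof.
rewrite mem_occs size_mkseq andbC.
case h: (size v + j <= n) => //=.
by rewrite window_sub ?(addnC j).
Qed.

Section Main.
End Main.

Lemma occ_S k w m : occursAt (morph_iword (blk k) w) (nseq k false) (S k w m).
Proof.
apply/eqP; apply: window_eq; first by rewrite size_nseq.
by move=> j; rewrite size_nseq => hj; rewrite zeros // nth_nseq hj.
Qed.

Lemma occ_blk k w m : occursAt (morph_iword (blk k) w) (blk k (w m)) (S k w m).
Proof. by apply/eqP; apply: window_eq => // j hj; rewrite blockval. Qed.

Lemma occ_inv k w i : occursAt (morph_iword (blk k) w) (nseq k false) i -> exists m, i = S k w m.
Proof.
move=> hocc; have [m /andP [h1 h2]] := S_cover k w i; exists m.
case: (ltnP (S k w m) i) => hlt; last by lia.
exfalso; rewrite S_succ in h2; move: h2; case hw: (w m) => /= h2; last by lia.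
rewrite size_cat size_nseq /= in h2.
have := occ_nth hocc (j := k - (i - S k w m)); rewrite size_nseq nth_nseq.
have hk : k - (i - S k w m) < k by lia.
rewrite hk => /(_ isT).
have -> : i + (k - (i - S k w m)) = S k w m + k by lia.
rewrite blockval; last by rewrite hw size_cat size_nseq /=; lia.
by rewrite hw nth_cat size_nseq ltnn subnn.
Qed.

Lemma occE k w i : occursAt (morph_iword (blk k) w) (nseq k false) i <-> exists m, i = S k w m.
Proof. by split => [/occ_inv //|[m ->]]; apply: occ_S. Qed.

Lemma rw_inv k w r : return_word (morph_iword (blk k) w) (nseq k false) r ->
  exists m, r = blk k (w m).
Proof.
set u := morph_iword (blk k) w; set v := nseq k false.
move=> [[i hw] ho]; move/eqP: hw => hw.
have mem : forall j, (j \in [:: 0; size r]) = (k + j <= size (r ++ v)) && occursAt u v (i + j).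
  by move=> j; rewrite -ho -{1}hw mem_occs_win size_nseq.
have hu : uniq (occs_fin v (r ++ v)) by apply: filter_uniq; apply: iota_uniq.
rewrite ho /= inE andbT in hu.
have hr : 0 < size r by case: (size r) hu.
have := mem 0; rewrite inE eqxx /= addn0 => /esym /andP [_ /occ_inv [m em]].
rewrite addn0 in em.
have := mem (size r); rewrite !inE eqxx orbT => /esym /andP [_ /occ_inv [m' em']].
exists m.
have hL := ne_blk k (w m).
have hSs := S_succ k w m.
case: (ltngtP (size (blk k (w m))) (size r)) => hc.
- have := mem (size (blk k (w m))).
  rewrite !inE size_cat size_nseq.
  have -> : (k + size (blk k (w m)) <= size r + k) = true by lia.
  rewrite em -hSs occ_S /=.
  case/orP => /eqP; lia.
- have h1 : S k w m < S k w m' by lia.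
  have h2 : S k w m' < S k w m.+1 by lia.
  rewrite !S_ltE in h1 h2; lia.
- have : take (size r) (drop 0 (r ++ v)) = r by rewrite drop0 take_size_cat.
  rewrite -{1}hw window_sub; last by rewrite size_cat; lia.
  rewrite addn0 em -hc => <-.
  by apply/eqP; apply: occ_blk.
Qed.

Lemma rw_char k w m : return_word (morph_iword (blk k) w) (nseq k false) (blk k (w m)).
Proof.
set v := nseq k false; set r := blk k (w m).
have hL : 0 < size r by apply: ne_blk.
have hSs : S k w m.+1 = S k w m + size r by rewrite S_succ.
have hwin : window (morph_iword (blk k) w) (S k w m) (size (r ++ v)) = r ++ v.
  apply: window_eq => // j; rewrite size_cat size_nseq => hj.
  rewrite nth_cat; case: ifP => hjr.
    by rewrite blockval.
  have -> : S k w m + j = S k w m.+1 + (j - size r) by lia.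
  rewrite (@zeros k w m.+1 (j - size r)); last by lia.
  by rewrite /v nth_nseq; case: ifP => //; lia.
split; first by exists (S k w m); apply/eqP.
apply: (@irr_sorted_eq _ ltn); first exact: ltn_trans.
- exact: ltnn.
- by apply: sorted_filter; [exact: ltn_trans | exact: iota_ltn_sorted].
- by rewrite /= andbT.
move=> j; rewrite -{1}hwin mem_occs_win size_nseq size_cat size_nseq !inE.
apply/idP/idP.
- case/andP => hj /occ_inv [m' e].
  have h1 : S k w m <= S k w m' by lia.
  have h2 : S k w m' <= S k w m.+1 by lia.
  rewrite !S_leE in h1 h2.
  have [em|em] : m' = m \/ m' = m.+1 by lia.
  + by rewrite em in e; apply/orP; left; apply/eqP; lia.
  + by rewrite em in e; apply/orP; right; apply/eqP; lia.
- case/orP => /eqP ->.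
  + by rewrite !addn0 /v occ_S; apply/andP; split => //; lia.
  + by rewrite -hSs /v occ_S; apply/andP; split => //; lia.
Qed.

Lemma has_letters w : sturmian w -> forall b, exists m, w m = b.
Proof.
move=> hs b; have [s [hu [hsz hiff]]] := hs 1.
case: (classic (exists m, w m = b)) => // hn; exfalso.
have hall : forall x, x \in s -> x = [:: ~~ b].
  move=> x /hiff [hx [i /eqP hi]].
  rewrite -hi hx /window /mkseq /= addn0; congr (_ :: _).
  by case: b hn => hn; case e: (w i) => //; exfalso; apply: hn; exists i.
move: hu hsz hall; case: s hiff => [|x [|y [|]]] //= _ hu _ hall.
have hx : x = [:: ~~ b] by apply: hall; rewrite inE eqxx.
have hy : y = [:: ~~ b] by apply: hall; rewrite !inE eqxx orbT.
by move: hu; rewrite hx hy inE eqxx.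
Qed.

Lemma sum_S k (w : iword) m : \sum_(j < m) size (blk k (w j)) = S k w m.
Proof.
elim: m => [|m IH]; first by rewrite big_ord0.
by rewrite big_ord_recr /= IH S_succ.
Qed.

Unset Implicit Arguments.

Theorem corollary16 (w : iword) (k : nat) :
  sturmian w ->
  (let u := iter k (morph_iword phi_b) w in
     is_prefix u (nseq k false) /\ bispecial u (nseq k false) /\
     derived_word_is_up_to_perm u (nseq k false) w) /\
  (sturmian (icons true w) ->
     iter k (morph_iword phi_a) (icons true w) = icons true (iter k (morph_iword phi_b) w)).
Proof.
move=> hs; split; last by move=> _; apply: part2.
rewrite /= iter_blk.
have occ0 : occursAt (morph_iword (blk k) w) (nseq k false) 0 by have := occ_S k w 0.
have [m0 hm0] := has_letters hs false.
have [m1 hm1] := has_letters hs true.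
have fz : factor (morph_iword (blk k) w) (nseq k.+1 false).
  exists (S k w m0); apply/eqP; apply: window_eq; first by rewrite size_nseq.
  move=> [|j] hj; first by rewrite (blockval (j := 0)) hm0.
  have -> : S k w m0 + j.+1 = S k w m0.+1 + j by rewrite S_succ hm0 /=; lia.
  rewrite zeros; last by rewrite size_nseq in hj; lia.
  by rewrite nth_nseq; case: ifP.
split; first exact: occ0.
split.
  split.
    exists false, true; split => //; split.
      by rewrite -cats1 (_ : nseq k false ++ [:: false] = nseq k.+1 false) //; elim: k {occ0 fz} => //= k ->.
    exists (S k w m1); rewrite -cats1 (_ : nseq k false ++ [:: true] = blk k (w m1)) ?hm1 //.
    by have := occ_blk k w m1; rewrite hm1.
  exists false, true; split => //; split => //.
  exists (S k w m1 + k); apply/eqP; apply: window_eq => //.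
  move=> [|j] hj.
    by rewrite addn0 blockval hm1 ?size_cat ?size_nseq //= ?nth_cat ?size_nseq ?ltnn ?subnn //; lia.
  have -> : S k w m1 + k + j.+1 = S k w m1.+1 + j by rewrite S_succ hm1 /= size_cat size_nseq /=; lia.
  rewrite zeros; last by move: hj; rewrite /= size_nseq.
  by rewrite /= nth_nseq; case: ifP.
exists [:: blk k false; blk k true], (fun m => nat_of_bool (w m)).
have nthb : forall b, nth [::] [:: blk k false; blk k true] (nat_of_bool b) = blk k b by case.
split; last first.
  exists nat_of_bool; split; first by move=> [] [].
  split => // -[|[|i]] // _; [by exists false | by exists true].
split.
  rewrite /= inE andbT; apply/eqP => e.
  by have := congr1 (last true) e; rewrite /= last_cat.
split.
  move=> r; split.
    by move/rw_inv => [m ->]; case: (w m); rewrite !inE eqxx ?orbT.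
  rewrite !inE => /orP [] /eqP ->; [have := rw_char k w m0 | have := rw_char k w m1]; rewrite ?hm0 ?hm1 //.
exists 0; split; first by split; [exact: occ0 | move=> i].
move=> m; split; first by case: (w m).
rewrite add0n (eq_bigr (fun j : 'I_m => size (blk k (w j)))); last by move=> j _; rewrite nthb.
by rewrite sum_S nthb; apply: occ_blk.
Qed.
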